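(* Let $(G,u,v,\alpha,\beta)$ be a Guvab with $\lim_{k\to\infty}W_k=\frac12$ and $\beta<1$. Then there exists $N$ such that for all $k\ge N$, $$\left|W_k-\tfrac12\right|=0.5\,|1-2\beta|^k.$$
   Context: A Guvab is a tuple $(G,u,v,\alpha,\beta)$ where $G$ is a finite, connected, simple graph, $u,v\in V(G)$, and $\alpha,\beta\in[0,1]$ with $\alpha\le\beta$. A random walk on $G$ with starting vertex $w$ and laziness $\gamma$ is the Markov chain $R_0=w$ and, for $i\ge1$, $R_i=R_{i-1}$ with probability $\gamma$ and $R_i=t$ with probability $\frac{1-\gamma}{\deg(R_{i-1})}$ for each neighbor $t$ of $R_{i-1}$. $\mu_k$ is the distribution after $k$ steps of the walk from $u$ with laziness $\alpha$, $\nu_k$ that of the walk from $v$ with laziness $\beta$, and $W_k=W(\mu_k,\nu_k)$ is the Wasserstein ($L^1$ optimal transport) distance with respect to the graph distance: the minimum over transportation plans (nonnegative $T$ on $V(G)\times V(G)$ with marginals $\mu_k,\nu_k$) of $\sum d(w_1,w_2)T(w_1,w_2)$. *)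

(* Defs.v *)
From HB Require Import structures.
From mathcomp Require Import all_boot all_order all_algebra.
From mathcomp Require Import all_classical all_reals all_analysis.
Set Implicit Arguments.
Unset Strict Implicit.
Unset Printing Implicit Defensive.
Import Order.TTheory GRing.Theory Num.Theory.
Local Open Scope ring_scope.

Definition simple_graph (T : finType) (e : rel T) : Prop :=
  symmetric e /\ irreflexive e.

Definition connected_graph (T : finType) (e : rel T) : Prop :=
  forall x y : T, connect e x y.

Fixpoint gball (T : finType) (e : rel T) (n : nat) (x : T) : {set T} :=
  match n with
  | 0 => [set x]
  | n'.+1 => gball e n' x :|: [set y | [exists z in gball e n' x, e z y]]
  end.

(* Graph distance: least n with y within distance n of x.  In a connected graph
   on T this is < #|T|; the default #|T| is never reached in that case. *)
Definition gdist (T : finType) (e : rel T) (x y : T) : nat :=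
  \big[minn/#|T|]_(n < #|T| | y \in gball e n x) (n : nat).

Definition gdeg (T : finType) (e : rel T) (x : T) : nat := #|[set y | e x y]|.

Definition walk_step (R : realType) (T : finType) (e : rel T) (g : R)
  (mu : T -> R) : T -> R :=
  fun t => g * mu t + \sum_(s : T | e s t) ((1 - g) / (gdeg e s)%:R) * mu s.

Definition walk_dist (R : realType) (T : finType) (e : rel T) (g : R)
  (w : T) (k : nat) : T -> R :=
  iter k (walk_step e g) (fun t => if t == w then 1 else 0).

Definition transport_plan (R : realType) (T : finType) (mu nu : T -> R)
  (P : T -> T -> R) : Prop :=
  (forall a b, 0 <= P a b) /\
  (forall a, \sum_(b : T) P a b = mu a) /\
  (forall b, \sum_(a : T) P a b = nu b).

(* L^1 Wasserstein distance w.r.t. the graph distance (the minimum over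
   plans; written as the infimum of the attained costs). *)
Definition wasserstein (R : realType) (T : finType) (e : rel T)
  (mu nu : T -> R) : R :=
  inf [set c : R | exists P : T -> T -> R, transport_plan mu nu P /\
         c = \sum_(a : T) \sum_(b : T) (gdist e a b)%:R * P a b].

Definition W_guvab (R : realType) (T : finType) (e : rel T) (u v : T)
  (alpha beta : R) (k : nat) : R :=
  wasserstein e (walk_dist e alpha u k) (walk_dist e beta v k).

(* Main.v *)
Require Import Defs.
From HB Require Import structures.
From mathcomp Require Import all_boot all_order all_algebra.
From mathcomp Require Import all_classical all_reals all_analysis.
From mathcomp Require Import ring lra zify.
Import Order.TTheory GRing.Theory Num.Theory.
Import numFieldNormedType.Exports.
Local Open Scope classical_set_scope.
Local Open Scope ring_scope.
Section Walk.
Variables (R : realType) (T : finType) (e : rel T).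

Definition dlt (x : T) : T -> R := fun t => if t == x then 1 else 0.
Definition Kr (g : R) (x y : T) : R :=
  g * (if y == x then 1 else 0) + (if e x y then (1 - g) / (gdeg e x)%:R else 0).

Lemma walk_step_lin g m y : walk_step e g m y = \sum_x m x * Kr g x y.
Proof.
rewrite /walk_step /Kr.
under [RHS]eq_bigr do rewrite mulrDr.
rewrite big_split /=.
congr (_ + _).
  rewrite (bigD1 y) //= eqxx mulr1 big1 ?addr0; first by rewrite mulrC.
  by move=> i; rewrite eq_sym => /negbTE ->; rewrite !mulr0.
rewrite big_mkcond /=; apply: eq_bigr => s _.
by case: (e s y); rewrite ?mulr0 // mulrC.
Qed.

Lemma sum_edge (x : T) (c : R) : \sum_y (if e x y then c else 0) = c * (gdeg e x)%:R.
Proof.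
rewrite -big_mkcond /= sumr_const /gdeg cardsE mulr_natr.
done.
Qed.

Hypothesis degpos : forall x, (0 < gdeg e x)%N.

Lemma Kr_ge0 g x y : 0 <= g <= 1 -> 0 <= Kr g x y.
Proof.
move=> /andP[g0 g1]; rewrite /Kr; apply: addr_ge0.
  by apply: mulr_ge0 => //; case: eqP.
case: (e x y) => //; apply: divr_ge0; rewrite ?subr_ge0 //.
Qed.

Lemma Kr_sum g x : \sum_y Kr g x y = 1.
Proof.
rewrite /Kr big_split /= sum_edge -big_distrr /= (bigD1 x) //= eqxx big1 ?addr0.
  rewrite mulr1 -mulrA mulVf ?mulr1; first by ring.
  by rewrite pnatr_eq0 -lt0n degpos.
by move=> i /negbTE ->.
Qed.

End Walk.

Lemma geo_small (R : realType) (q eps : R) : 0 <= q < 1 -> 0 < eps -> exists J : nat, q ^+ J <= eps.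
Proof.
move=> /andP[q0 q1] ep.
have hq : `|q| < 1 by rewrite ger0_norm.
have := cvg_expr hq.
move/cvgrPdist_lt => /(_ eps ep) [J _ HJ].
exists J; have := HJ J (leqnn J).
rewrite /= sub0r normrN ger0_norm ?exprn_ge0 //; apply: ltW.
Qed.
Section Doeblin.
Variables (R : realType) (T : finType) (stp : (T -> R) -> (T -> R)) (K : T -> T -> R).
Hypothesis stp_lin : forall m y, stp m y = \sum_x m x * K x y.
Hypothesis K_ge0 : forall x y, 0 <= K x y.
Hypothesis K_sum : forall x, \sum_y K x y = 1.

Definition Kn n x y := iter n stp (@dlt R T x) y.

Lemma iter_lin n m y : iter n stp m y = \sum_x m x * Kn n x y.
Proof.
elim: n y => [|n IH] y /=.
  rewrite /Kn /= /dlt (bigD1 y) //= eqxx mulr1 big1 ?addr0 //.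
  by move=> i; rewrite eq_sym => /negbTE ->; rewrite mulr0.
rewrite stp_lin /Kn /=.
under eq_bigr do rewrite IH big_distrl /=.
rewrite exchange_big /=; apply: eq_bigr => x _.
rewrite stp_lin big_distrr /=; apply: eq_bigr => z _.
by rewrite mulrA.
Qed.

Lemma Kn_ge0 n x y : 0 <= Kn n x y.
Proof.
elim: n y => [|n IH] y /=; first by rewrite /Kn /= /dlt; case: eqP.
rewrite /Kn /= stp_lin; apply: sumr_ge0 => z _; apply: mulr_ge0 => //; exact: IH.
Qed.

Lemma Kn_sum n x : \sum_y Kn n x y = 1.
Proof.
elim: n => [|n IH].
  rewrite /Kn /= /dlt (bigD1 x) //= eqxx big1 ?addr0 //.
  by move=> i /negbTE ->.
rewrite /Kn /=; under eq_bigr do rewrite stp_lin.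
rewrite exchange_big /= -[RHS]IH; apply: eq_bigr => z _.
by rewrite -big_distrr /= K_sum mulr1.
Qed.

Lemma iter_mass n m : \sum_y iter n stp m y = \sum_x m x.
Proof.
under eq_bigr do rewrite iter_lin.
rewrite exchange_big /=; apply: eq_bigr => x _.
by rewrite -big_distrr /= Kn_sum mulr1.
Qed.

Definition norm1 (m : T -> R) := \sum_x `|m x|.

Lemma norm1_ge0 m : 0 <= norm1 m.
Proof. by apply: sumr_ge0 => x _. Qed.

Lemma norm_iter n m : norm1 (iter n stp m) <= norm1 m.
Proof.
rewrite /norm1.
apply: (@le_trans _ _ (\sum_y \sum_x `|m x| * Kn n x y)).
  apply: ler_sum => y _; rewrite iter_lin.
  apply: (le_trans (ler_norm_sum _ _ _)); apply: ler_sum => x _.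
  by rewrite normrM (ger0_norm (Kn_ge0 _ _ _)).
rewrite exchange_big /=; apply: ler_sum => x _.
by rewrite -big_distrr /= Kn_sum mulr1.
Qed.

Variables (c : T -> bool) (N : nat) (d : R).
Hypothesis d_pos : 0 < d.
Hypothesis d_le : forall x y, c x = c y -> d <= Kn N x y.

Definition Sc (m : T -> R) := forall b, \sum_(x | c x == b) m x = 0.

Lemma contract m : Sc m -> norm1 (iter N stp m) <= (1 - d) * norm1 m.
Proof.
move=> Sm; rewrite /norm1.
have E y : iter N stp m y = \sum_x m x * (Kn N x y - d * (if c x == c y then 1 else 0)).
  rewrite iter_lin.
  under [RHS]eq_bigr do rewrite mulrBr.
  rewrite sumrB.
  have -> : \sum_x m x * (d * (if c x == c y then 1 else 0)) = 0.
    have -> : \sum_x m x * (d * (if c x == c y then 1 else 0)) = d * \sum_(x | c x == c y) m x.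
      rewrite big_distrr /= [RHS]big_mkcond /=.
      apply: eq_bigr => x _; case: ifP => _; by rewrite ?mulr1 ?mulr0 // mulrC.
    by rewrite Sm mulr0.
  by rewrite subr0.
have G x z : 0 <= Kn N x z - d * (if c x == c z then 1 else 0).
  case: (boolP (c x == c z)) => [/eqP h|_].
    by rewrite mulr1 subr_ge0; apply: d_le.
  by rewrite mulr0 subr0; exact: Kn_ge0.
apply: (@le_trans _ _ (\sum_y \sum_x `|m x| * (Kn N x y - d * (if c x == c y then 1 else 0)))).
  apply: ler_sum => y _; rewrite E.
  apply: (le_trans (ler_norm_sum _ _ _)); apply: ler_sum => x _.
  by rewrite normrM (ger0_norm (G _ _)).
rewrite exchange_big /= big_distrr /=; apply: ler_sum => x _.
rewrite -big_distrr /= sumrB Kn_sum -big_distrr /= mulrC; apply: ler_wpM2r => //.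
rewrite lerB // ler_peMr ?(ltW d_pos) //.
rewrite (bigD1 x) //= eqxx lerDl; apply: sumr_ge0 => i _; by case: ifP.
Qed.

Hypothesis Sc_inv : forall m, Sc m -> Sc (stp m).

Lemma Sc_iter n m : Sc m -> Sc (iter n stp m).
Proof. by elim: n => [|n IH] //= Sm; apply: Sc_inv; apply: IH. Qed.

Hypothesis d_le1 : d <= 1.

Lemma decay_pow j r m : Sc m -> norm1 (iter (j * N + r) stp m) <= (1 - d) ^+ j * norm1 m.
Proof.
move=> Sm; elim: j => [|j IH].
  by rewrite mul0n add0n expr0 mul1r norm_iter.
rewrite mulSn -addnA iterD exprS -mulrA.
have H := contract _ (Sc_iter (j * N + r) _ Sm).
apply: (le_trans H).
apply: ler_wpM2l => //; by rewrite subr_ge0.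
Qed.

Lemma decay m : Sc m -> (0 < N)%N -> forall eps, 0 < eps ->
  exists M, forall k, (M <= k)%N -> norm1 (iter k stp m) <= eps.
Proof.
move=> Sm N0 eps ep.
have q01 : 0 <= 1 - d < 1 by apply/andP; split; [rewrite subr_ge0 | rewrite ltrBlDr ltrDl].
have ep' : 0 < eps / (norm1 m + 1).
  by apply: divr_gt0 => //; apply: ltr_wpDl; [exact: norm1_ge0|].
have [J HJ] := @geo_small _ _ _ q01 ep'.
exists (J * N)%N => k Hk.
have hJ : (J <= k %/ N)%N by have := leq_div2r N Hk; rewrite mulnK.
rewrite (divn_eq k N); apply: (le_trans (decay_pow _ _ _ Sm)).
apply: (@le_trans _ _ ((1 - d) ^+ J * norm1 m)).
  apply: ler_wpM2r; first exact: norm1_ge0.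
  move: q01 => /andP[q0 q1]; apply: ler_wiXn2l => //; exact: ltW.
apply: (@le_trans _ _ (eps / (norm1 m + 1) * norm1 m)).
  apply: ler_wpM2r => //; exact: norm1_ge0.
rewrite mulrAC ler_pdivrMr ?ler_wpM2l ?lerDl //; first exact: ltW.
by apply: ltr_wpDl; [exact: norm1_ge0|].
Qed.

End Doeblin.
Section Reach.
Variables (T : finType) (e : rel T).
Hypothesis esym : symmetric e.

Fixpoint reach (m : nat) (x y : T) : bool :=
  match m with
  | 0 => y == x
  | m'.+1 => [exists z, reach m' x z && e z y]
  end.

Lemma reachS m x y z : reach m x y -> e y z -> reach m.+1 x z.
Proof. by move=> h1 h2 /=; apply/existsP; exists y; rewrite h1 h2. Qed.
Arguments reachS {m x y z}.

Lemma reach1 x z : e x z -> reach 1 x z.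
Proof. by move=> h; apply: (@reachS 0 x x) => //=. Qed.
Arguments reach1 {x z}.

Lemma reach_cat m n x y z : reach m x y -> reach n y z -> reach (m + n) x z.
Proof.
move=> h; elim: n z => [|n IH] z /=; first by move/eqP->; rewrite addn0.
move/existsP=> [w /andP[h1 h2]]; rewrite addnS; exact: (reachS (IH _ h1) h2).
Qed.
Arguments reach_cat {m n x y z}.

Lemma reach_sym m x y : reach m x y -> reach m y x.
Proof.
elim: m x y => [|m IH] x y /=; first by move/eqP->.
move/existsP=> [z /andP[h1 h2]].
have h3 : e y z by rewrite esym.
by have := reach_cat (reach1 h3) (IH _ _ h1); rewrite add1n.
Qed.

Lemma reach_connect x y : connect e x y -> exists m, reach m x y.
Proof.
move/connectP=> [p]; elim: p x => [|z p IH] x /=.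
  by move=> _ hy; exists 0%N; rewrite /= hy.
move=> /andP[h1 h2] hy; have [m hm] := IH _ h2 hy.
by exists (1 + m)%N; apply: reach_cat (reach1 h1) hm.
Qed.

Hypothesis degpos : forall x, (0 < gdeg e x)%N.

Lemma has_nb y : exists z, e y z.
Proof.
have := degpos y; rewrite /gdeg card_gt0 => /set0Pn [z]; rewrite inE => h.
by exists z.
Qed.

Lemma reachSS m x y : reach m x y -> reach m.+2 x y.
Proof.
move=> h; have [z hz] := has_nb y.
apply: (reachS (reachS h hz)); by rewrite esym.
Qed.

Lemma reach_add2 m j x y : reach m x y -> reach (m + j.*2) x y.
Proof.
move=> h; elim: j => [|j IH]; first by rewrite addn0.
by rewrite doubleS !addnS; apply: reachSS.
Qed.

End Reach.
Arguments reach {T} e m x y.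
Arguments reachS {T e m x y z}.
Arguments reach1 {T e x z}.
Arguments reach_cat {T e m n x y z}.

Section WalkPos.
Variables (R : realType) (T : finType) (e : rel T).
Hypothesis degpos : forall x, (0 < gdeg e x)%N.

Lemma walk_ge0 (g : R) w k t : 0 <= g <= 1 -> 0 <= walk_dist e g w k t.
Proof.
move=> hg; exact: (@Kn_ge0 R T _ _ (walk_step_lin R T e g) (fun x y => Kr_ge0 R T e g x y hg) k w t).
Qed.

Lemma walk_mass (g : R) w k : \sum_t walk_dist e g w k t = 1.
Proof.
exact: (@Kn_sum R T _ _ (walk_step_lin R T e g) (Kr_sum R T e degpos g) k w).
Qed.

Lemma walk_pos (g : R) m x y : 0 <= g < 1 -> reach e m x y -> 0 < walk_dist e g x m y.
Proof.
move=> /andP[g0 g1]; have g01 : 0 <= g <= 1 by rewrite g0 ltW.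
elim: m y => [|m IH] y /=.
  by move/eqP->; rewrite /walk_dist /= eqxx.
move/existsP=> [z /andP[h1 h2]].
rewrite /walk_dist /= walk_step_lin (bigD1 z) //=.
apply: ltr_wpDr; first by apply: sumr_ge0 => i _; apply: mulr_ge0; [exact: walk_ge0|exact: Kr_ge0].
apply: mulr_gt0; first exact: IH.
rewrite /Kr h2; apply: ltr_wpDl.
  by apply: mulr_ge0 => //; case: eqP.
by apply: divr_gt0; rewrite ?subr_gt0 // ltr0n degpos.
Qed.

Lemma walk_lazy (g : R) m x y : 0 < g <= 1 -> 0 < walk_dist e g x m y -> 0 < walk_dist e g x m.+1 y.
Proof.
move=> /andP[g0 g1] h; have g01 : 0 <= g <= 1 by rewrite g1 ltW.
rewrite /walk_dist /= walk_step_lin (bigD1 y) //=.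
apply: ltr_wpDr; first by apply: sumr_ge0 => i _; apply: mulr_ge0; [exact: walk_ge0|exact: Kr_ge0].
apply: mulr_gt0; first exact: h.
rewrite /Kr eqxx mulr1; apply: ltr_wpDr => //.
by case: (e y y) => //; apply: divr_ge0; rewrite ?subr_ge0 // ler0n.
Qed.

Lemma walk_supp m x y : walk_dist e (0 : R) x m y != 0 -> reach e m x y.
Proof.
elim: m y => [|m IH] y.
  rewrite /walk_dist /= => H; apply/negPn/negP => hn; move: H; by rewrite (negbTE hn) eqxx.
have -> : walk_dist e (0:R) x m.+1 y = walk_step e 0 (walk_dist e 0 x m) y by [].
rewrite {1}/walk_step mul0r add0r => H /=.
case/boolP: [exists z, reach e m x z && e z y] => // /existsPn hn.
move: H; rewrite big1 ?eqxx // => s hs.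
have := hn s; rewrite hs andbT => /negP hr.
have -> : walk_dist e (0:R) x m s = 0.
  by apply/eqP; apply/negPn/negP => /IH; apply: hr.
by rewrite mulr0.
Qed.

End WalkPos.
Lemma bigminn_le (I : finType) (P : pred I) (F : I -> nat) x0 j :
  P j -> (\big[minn/x0]_(i | P i) F i <= F j)%N.
Proof.
move=> Pj; rewrite unlock /=.
have : j \in index_enum I by rewrite mem_index_enum.
elim: (index_enum I) => //= i r IH; rewrite inE => /orP [/eqP <-|/IH h].
  by rewrite Pj geq_minl.
by case: (P i) => //; rewrite geq_min h orbT.
Qed.

Section Wass.
Variables (R : realType) (T : finType) (e : rel T).

Definition cost (P : T -> T -> R) := \sum_a \sum_b (gdist e a b)%:R * P a b.

Lemma cost_ge0 mu nu P : transport_plan mu nu P -> 0 <= cost P.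
Proof.
move=> [P0 _]; apply: sumr_ge0 => a _; apply: sumr_ge0 => b _.
by apply: mulr_ge0 => //; rewrite ler0n.
Qed.

Lemma W_le mu nu P : transport_plan mu nu P -> wasserstein e mu nu <= cost P.
Proof.
move=> hP; rewrite /wasserstein.
apply: ge_inf; last by exists P; split.
exists 0 => c [Q [hQ ->]]; exact: cost_ge0 hQ.
Qed.

Lemma W_ge mu nu (lb : R) : (exists P, transport_plan mu nu P) ->
  (forall P, transport_plan mu nu P -> lb <= cost P) -> lb <= wasserstein e mu nu.
Proof.
move=> [P hP] H; apply: lb_le_inf.
  by exists (cost P), P; split.
by move=> c [Q [hQ ->]]; apply: H.
Qed.

Lemma gdist_le_T a b : (gdist e a b <= #|T|)%N.
Proof.
rewrite /gdist; apply: (big_ind (fun k => k <= #|T|)%N) => //.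
  by move=> x y hx hy; rewrite geq_min hx.
by move=> i _; apply: ltnW.
Qed.

Lemma gdist_le a b (i : 'I_#|T|) : b \in gball e i a -> (gdist e a b <= i)%N.
Proof. by move=> h; rewrite /gdist; apply: (@bigminn_le _ (fun n : 'I_#|T| => b \in gball e n a) (fun n => nat_of_ord n)). Qed.

Lemma gdist_aa a : gdist e a a = 0%N.
Proof.
have hT : (0 < #|T|)%N by apply/card_gt0P; exists a.
apply/eqP; rewrite -leqn0; apply: (gdist_le a a (Ordinal hT)).
by rewrite /= inE.
Qed.

Lemma gdist_pos a b : a != b -> (0 < gdist e a b)%N.
Proof.
move=> hab; have hT : (0 < #|T|)%N by apply/card_gt0P; exists a.
rewrite /gdist; apply: (big_ind (fun k => 0 < k)%N) => //.
  by move=> x y hx hy; rewrite leq_min hx.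
move=> i hi; rewrite lt0n; apply/negP => /eqP h.
by move: hi; rewrite h /= inE eq_sym (negbTE hab).
Qed.

Lemma gdist_edge a b : e a b -> a != b -> (gdist e a b <= 1)%N.
Proof.
move=> hab hne.
have hT : (1 < #|T|)%N.
  rewrite (cardD1 a) (cardD1 b) !inE eq_sym hne /=.
  by [].
apply: (gdist_le a b (Ordinal hT)) => /=.
rewrite !inE; apply/orP; right; apply/existsP; exists a; by rewrite inE eqxx.
Qed.

Lemma LB_ind mu nu P (phi : T -> bool) : transport_plan mu nu P ->
  \sum_b (if phi b then nu b else 0) - \sum_a (if phi a then mu a else 0) <= cost P.
Proof.
move=> [P0 [Pr Pc]].
have -> : \sum_b (if phi b then nu b else 0) = \sum_a \sum_b (if phi b then P a b else 0).
  rewrite exchange_big /=; apply: eq_bigr => b _; rewrite -Pc.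
  by case: (phi b) => //; rewrite big1.
have -> : \sum_a (if phi a then mu a else 0) = \sum_a \sum_b (if phi a then P a b else 0).
  apply: eq_bigr => a _; rewrite -Pr.
  by case: (phi a) => //; rewrite big1.
rewrite -sumrB; apply: ler_sum => a _; rewrite -sumrB; apply: ler_sum => b _.
case: (eqVneq a b) => [->|hne].
  by rewrite subrr gdist_aa mul0r.
have h1 : 1 <= (gdist e a b)%:R :> R by rewrite ler1n gdist_pos.
apply: (@le_trans _ _ (P a b)).
  by have := P0 a b; case: (phi a); case: (phi b) => /= h; lra.
by have := P0 a b; nra.
Qed.

End Wass.
Section WassUB.
Variables (R : realType) (T : finType) (e : rel T).

Lemma sum_diag (f : T -> R) b : \sum_a (if a == b then f a else 0) = f b.
Proof. by rewrite (bigD1 b) //= eqxx big1 ?addr0 // => i /negbTE ->. Qed.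

Lemma sum_diag' (f : T -> R) a : \sum_b (if a == b then f a else 0) = f a.
Proof. by rewrite (bigD1 a) //= eqxx big1 ?addr0 // => i; rewrite eq_sym => /negbTE ->. Qed.

Lemma UB_L1 (mu nu : T -> R) : (forall a, 0 <= mu a) -> (forall a, 0 <= nu a) ->
  \sum_a mu a = \sum_a nu a ->
  wasserstein e mu nu <= #|T|%:R * \sum_a `|mu a - nu a|.
Proof.
move=> mu0 nu0 hs.
pose m a := if mu a <= nu a then mu a else nu a.
pose p a := mu a - m a.
pose q a := nu a - m a.
pose s := \sum_a p a.
have p0 a : 0 <= p a by rewrite /p /m; case: (leP (mu a) (nu a)) => h; lra.
have q0 a : 0 <= q a by rewrite /q /m; case: (leP (mu a) (nu a)) => h; lra.
have m0 a : 0 <= m a by rewrite /m; case: (leP (mu a) (nu a)) => h.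
have sq : \sum_a q a = s.
  rewrite /s /p /q !sumrB hs //.
have s0 : 0 <= s by apply: sumr_ge0.
pose P a b := (if a == b then m a else 0) + p a * q b * s^-1.
have hP : transport_plan mu nu P.
  split; [|split].
  - move=> a b; apply: addr_ge0; first by case: eqP.
    by apply: mulr_ge0; [apply: mulr_ge0|rewrite invr_ge0].
  - move=> a; rewrite /P big_split /= sum_diag' -big_distrl -big_distrr /= sq.
    have [hs0|sn0] := eqVneq s 0.
      have pz : forall i, p i = 0.
        by move=> i; apply: (@psumr_eq0P _ _ predT p (fun i _ => p0 i)).
      by have := pz a; rewrite hs0 mulr0 mul0r addr0 /p; lra.
    by rewrite -mulrA mulfV // mulr1 /p; lra.
  - move=> b; rewrite /P big_split /= sum_diag -!big_distrl /= -/s.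
    have [hs0|sn0] := eqVneq s 0.
      have qz : forall i, q i = 0.
        have sq0 : \sum_a q a = 0 by rewrite sq.
        by move=> i; apply: (@psumr_eq0P _ _ predT q (fun i _ => q0 i)).
      by have := qz b; rewrite hs0 invr0 mulr0 addr0 /q; lra.
    by rewrite mulrAC mulfV // mul1r /q; lra.
apply: (le_trans (@W_le _ _ e _ _ _ hP)).
rewrite /cost; apply: (@le_trans _ _ (\sum_a \sum_b #|T|%:R * (p a * q b / s))).
  apply: ler_sum => a _; apply: ler_sum => b _; rewrite /P mulrDr.
  have pq0 : 0 <= p a * q b / s by apply: mulr_ge0; [apply: mulr_ge0|rewrite invr_ge0].
  have hd : (gdist e a b)%:R <= #|T|%:R :> R by rewrite ler_nat gdist_le_T.
  case: (eqVneq a b) => [<-|hne].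
    have pq0' : 0 <= p a * q a / s by apply: mulr_ge0; [apply: mulr_ge0|rewrite invr_ge0].
    rewrite gdist_aa !mul0r add0r; apply: mulr_ge0 => //.
  rewrite mulr0 add0r; exact: ler_wpM2r.
under eq_bigr => a _ do rewrite -big_distrr /= -big_distrl /= -big_distrr /= sq.
rewrite -big_distrr /= -!big_distrl /= -/s.
apply: ler_wpM2l; first by rewrite ler0n.
have hps : s <= \sum_a `|mu a - nu a|.
  apply: ler_sum => a _; rewrite /p /m.
  have h1 := ler_norm (mu a - nu a).
  have h2 : nu a - mu a <= `|mu a - nu a| by rewrite distrC; exact: ler_norm.
  by case: (leP (mu a) (nu a)) => h; lra.
have [hs0|sn0] := eqVneq s 0.
  by rewrite hs0 mulr0 mul0r; apply: sumr_ge0.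
by rewrite mulfK.
Qed.
End WassUB.
Section Surj.
Variables (R : realType) (T : finType) (e : rel T) (c : T -> bool).
Hypothesis esym : symmetric e.
Hypothesis eirr : irreflexive e.
Hypothesis ebip : forall x y, e x y -> c y = ~~ c x.

Definition Lop (C : T -> T -> R) (z : T) : R :=
  \sum_y (if e z y then C z y + C y z else 0).

Lemma Lop_lin (C1 C2 : T -> T -> R) (k1 k2 : R) z :
  Lop (fun a b => k1 * C1 a b + k2 * C2 a b) z = k1 * Lop C1 z + k2 * Lop C2 z.
Proof.
rewrite /Lop !big_distrr -big_split /=; apply: eq_bigr => y _.
case: (e z y); rewrite ?mulr0 ?addr0 //; ring.
Qed.

Lemma Lop_sum (F : T -> T -> T -> R) (h : T -> R) z :
  Lop (fun a b => \sum_x h x * F x a b) z = \sum_x h x * Lop (F x) z.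
Proof.
rewrite /Lop.
under [RHS]eq_bigr do rewrite big_distrr.
rewrite [RHS]exchange_big /=; apply: eq_bigr => y _.
case: (e z y); last by rewrite big1 // => x _; rewrite mulr0.
by rewrite -big_split /=; apply: eq_bigr => x _; rewrite mulrDr.
Qed.

Lemma sum_ind (P : pred T) x :
  \sum_w (if P w then (if w == x then 1 else 0) else 0) = (if P x then 1 else 0) :> R.
Proof.
rewrite (bigD1 x) //= eqxx big1 ?addr0 //.
by move=> i /negbTE ->; case: (P i).
Qed.

Variable r : T.
Definition sgnc (x : T) : R := if c x == c r then 1 else -1.
Definition bvec (x : T) : T -> R :=
  fun z => (if z == x then 1 else 0) - sgnc x * (if z == r then 1 else 0).

Lemma bvec_reach m x : reach e m r x -> exists C, forall z, Lop C z = bvec x z.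
Proof.
elim: m x => [|m IH] x /=.
  move/eqP->; exists (fun _ _ => 0) => z; rewrite /Lop /bvec /sgnc eqxx mul1r subrr.
  by apply: big1 => y _; case: (e z y); rewrite ?addr0.
move/existsP=> [y /andP[hy hyx]].
have [Cy HCy] := IH _ hy.
exists (fun a b => 1 * ((if a == y then 1 else 0) * (if b == x then 1 else 0)) + (-1) * Cy a b) => z.
rewrite Lop_lin HCy.
have hxy : x != y by apply/eqP => h; move: hyx; rewrite h eirr.
have -> : Lop (fun a b => (if a == y then 1 else 0) * (if b == x then 1 else 0)) z
   = (if z == y then 1 else 0) + (if z == x then 1 else 0).
  rewrite /Lop.
  have -> : \sum_w (if e z w then (if z == y then 1 else 0) * (if w == x then 1 else 0)
      + (if w == y then 1 else 0) * (if z == x then 1 else 0) else 0) =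
      (if z == y then 1 else 0) * \sum_w (if e z w then (if w == x then 1 else 0) else 0)
      + (if z == x then 1 else 0) * \sum_w (if e z w then (if w == y then 1 else 0) else 0) :> R.
    rewrite !big_distrr -big_split; apply: eq_bigr => w _ /=.
    case: (e z w); rewrite ?mulr0 ?addr0 //; ring.
  rewrite !sum_ind.
  have hyx' : (y == x) = false by rewrite eq_sym (negbTE hxy).
  case: (eqVneq z y) => [->|hzy] /=; first by rewrite hyx hyx' ?eqxx /=; ring.
  case: (eqVneq z x) => [->|hzx] /=; last by rewrite !mul0r.
  by rewrite esym hyx mul0r mul1r.
rewrite /bvec /sgnc (ebip _ _ hyx).
move: (if z == y then (1:R) else 0) (if z == x then (1:R) else 0) (if z == r then (1:R) else 0) => a1 a2 a3.
case: (c y); case: (c r); rewrite /=; ring.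
Qed.

Hypothesis hconn : forall x y, connect e x y.

Lemma surj_bound : exists K : R, 0 <= K /\ forall h : T -> R,
  (forall b, \sum_(x | c x == b) h x = 0) ->
  exists C, (forall z, Lop C z = h z) /\ forall a b, `|C a b| <= K * \sum_x `|h x|.
Proof.
have H x : exists C, forall z, Lop C z = bvec x z.
  have [m hm] := @reach_connect _ e r x (hconn r x); exact: (bvec_reach _ _ hm).
have [F HF] := choice H.
exists (\sum_x \sum_a \sum_b `|F x a b|); split.
  by apply: sumr_ge0 => x _; apply: sumr_ge0 => a _; apply: sumr_ge0.
move=> h hS; exists (fun a b => \sum_x h x * F x a b); split.
  move=> z; rewrite Lop_sum.
  under eq_bigr do rewrite HF /bvec mulrBr.
  rewrite sumrB.
  have -> : \sum_x h x * (if z == x then 1 else 0) = h z.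
    by rewrite (bigD1 z) //= eqxx mulr1 big1 ?addr0 // => i; rewrite eq_sym => /negbTE ->; rewrite mulr0.
  have -> : \sum_x h x * (sgnc x * (if z == r then 1 else 0)) = 0; last by rewrite subr0.
  have E : \sum_x h x * sgnc x = 0.
    rewrite (bigID (fun x => c x == c r)) /=.
    have -> : \sum_(i | c i == c r) h i * sgnc i = \sum_(i | c i == c r) h i.
      by apply: eq_bigr => i hi; rewrite /sgnc hi mulr1.
    have -> : \sum_(i | c i != c r) h i * sgnc i = - \sum_(i | c i == ~~ c r) h i.
      rewrite -sumrN; apply: eq_big => i.
        by case: (c i); case: (c r).
      by move=> hi; rewrite /sgnc (negbTE hi) mulrN1.
    by rewrite !hS oppr0 addr0.
  move: (if z == r then (1:R) else 0) => a.
  have -> : \sum_x h x * (sgnc x * a) = a * \sum_x h x * sgnc x.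
    by rewrite big_distrr /=; apply: eq_bigr => x _; rewrite mulrA mulrC.
  by rewrite E mulr0.
move=> a b; rewrite big_distrr /=.
apply: (le_trans (ler_norm_sum _ _ _)); apply: ler_sum => x _.
rewrite normrM mulrC; apply: ler_wpM2r => //.
apply: (@le_trans _ _ (\sum_a0 \sum_b0 `|F x a0 b0|)).
  apply: (@le_trans _ _ (\sum_b0 `|F x a b0|)).
    by rewrite [X in _ <= X](bigD1 b) //= lerDl; apply: sumr_ge0.
  by rewrite [X in _ <= X](bigD1 a) //= lerDl; apply: sumr_ge0 => i _; apply: sumr_ge0.
rewrite [X in _ <= X](bigD1 x) //= lerDl; by apply: sumr_ge0 => i _; apply: sumr_ge0 => j _; apply: sumr_ge0.
Qed.

End Surj.
Definition ev0 (R : realType) (f : nat -> R) :=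
  forall eps, 0 < eps -> exists M, forall k, (M <= k)%N -> f k <= eps.
Arguments ev0 {R} f.

Lemma ev0_add (R : realType) (f g : nat -> R) : ev0 f -> ev0 g -> ev0 (fun k => f k + g k).
Proof.
move=> hf hg eps ep.
have ep2 : 0 < eps / 2 by apply: divr_gt0.
have [M1 H1] := hf _ ep2; have [M2 H2] := hg _ ep2.
exists (maxn M1 M2) => k hk.
have := H1 k (leq_trans (leq_maxl _ _) hk); have := H2 k (leq_trans (leq_maxr _ _) hk).
lra.
Qed.

Lemma ev0_scale (R : realType) (c : R) (f : nat -> R) : 0 <= c -> ev0 f -> ev0 (fun k => c * f k).
Proof.
move=> c0 hf eps ep.
have ep' : 0 < eps / (c + 1) by apply: divr_gt0 => //; lra.
have [M H] := hf _ ep'; exists M => k hk.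
have h := H k hk.
have c1 : 0 < c + 1 by lra.
case: (leP 0 (f k)) => h0.
  apply: (@le_trans _ _ ((c + 1) * f k)); first by apply: ler_wpM2r => //; lra.
  by rewrite mulrC -ler_pdivlMr.
have : c * f k <= 0 by nra.
lra.
Qed.

Lemma ev0_le (R : realType) (f g : nat -> R) : (forall k, g k <= f k) -> ev0 f -> ev0 g.
Proof.
move=> hle hf eps ep; have [M H] := hf _ ep; exists M => k hk.
exact: le_trans (hle k) (H k hk).
Qed.

Lemma ev0_geo (R : realType) (q : R) : 0 <= q < 1 -> ev0 (fun k => q ^+ k).
Proof.
move=> hq eps ep; have [J HJ] := @geo_small R q eps hq ep.
exists J => k hk; apply: le_trans HJ.
move: hq => /andP[q0 q1]; apply: ler_wiXn2l => //; exact: ltW.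
Qed.

Lemma fmin (R : realType) (I : finType) (P : I -> Prop) (f : I -> R) :
  (forall i, P i -> 0 < f i) -> exists d : R, [/\ 0 < d, d <= 1 & forall i, P i -> d <= f i].
Proof.
move=> hp.
suff : forall s : seq I, exists d : R, [/\ 0 < d, d <= 1 & forall i, i \in s -> P i -> d <= f i].
  move=> /(_ (enum I)) [d [h1 h2 h3]]; exists d; split => // i; apply: h3; by rewrite mem_enum.
elim=> [|i s [d [h1 h2 h3]]].
  by exists 1; split.
case: (pselect (P i)) => Pi.
  have fi := hp _ Pi.
  exists (if d <= f i then d else f i); split.
  - by case: ifP.
  - by case: (leP d (f i)) => h; lra.
  move=> j; rewrite inE => /orP [/eqP ->|js] Pj.
    by case: (leP d (f i)) => h; lra.
  have := h3 _ js Pj; by case: (leP d (f i)) => h; lra.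
exists d; split => // j; rewrite inE => /orP [/eqP -> //|js] Pj; exact: h3.
Qed.

Section Main.
Variables (R : realType) (T : finType) (e : rel T).
Hypothesis esym : symmetric e.
Hypothesis eirr : irreflexive e.
Hypothesis hconn : forall x y, connect e x y.
Hypothesis degpos : forall x, (0 < gdeg e x)%N.
Variable r0 : T.

Definition Dg : R := \sum_x (gdeg e x)%:R.
Definition pi (x : T) : R := (gdeg e x)%:R / Dg.

Lemma Dg_pos : 0 < Dg.
Proof.
rewrite /Dg (bigD1 r0) //=; apply: ltr_pwDl; first by rewrite ltr0n degpos.
by apply: sumr_ge0 => i _; rewrite ler0n.
Qed.

Lemma pi_ge0 x : 0 <= pi x.
Proof. by apply: divr_ge0; [rewrite ler0n|exact: ltW Dg_pos]. Qed.

Lemma pi_sum : \sum_x pi x = 1.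
Proof. by rewrite /pi -big_distrl /= -/Dg mulfV // gt_eqF // Dg_pos. Qed.

Lemma deg_in (f : T -> R) x : \sum_(s | e s x) f s = \sum_s (if e x s then f s else 0).
Proof. by rewrite big_mkcond /=; apply: eq_bigr => s _; rewrite esym. Qed.

Lemma pi_stat g t : walk_step e g pi t = pi t.
Proof.
rewrite /walk_step deg_in.
have -> : \sum_s (if e t s then (1 - g) / (gdeg e s)%:R * pi s else 0)
        = \sum_s (if e t s then (1 - g) / Dg else 0).
  apply: eq_bigr => s _; case: (e t s) => //; rewrite /pi; field.
  by rewrite (gt_eqF Dg_pos) pnatr_eq0 -lt0n degpos.
rewrite sum_edge /pi; field.
by rewrite (gt_eqF Dg_pos).
Qed.

Lemma iter_stat g k : iter k (walk_step e g) pi = pi.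
Proof.
elim: k => [|k IH] //=; rewrite IH; apply/funext => t; exact: pi_stat.
Qed.

Lemma iter_sub g k (m1 m2 : T -> R) t :
  iter k (walk_step e g) (fun x => m1 x - m2 x) t =
  iter k (walk_step e g) m1 t - iter k (walk_step e g) m2 t.
Proof.
rewrite !(@iter_lin R T _ _ (walk_step_lin R T e g)) -sumrB; apply: eq_bigr => x _; by rewrite mulrBl.
Qed.

Lemma Sc_inv_gen g (c : T -> bool) (sg : bool -> bool) :
  (forall s b, \sum_(x | c x == b) Kr R T e g s x = if c s == sg b then 1 else 0) ->
  forall m, Sc R T c m -> Sc R T c (walk_step e g m).
Proof.
move=> H m Sm b.
under eq_bigr do rewrite walk_step_lin.
rewrite exchange_big /=.
have -> : \sum_j \sum_(i | c i == b) m j * Kr R T e g j i = \sum_(j | c j == sg b) m j.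
  rewrite [RHS]big_mkcond /=; apply: eq_bigr => j _.
  by rewrite -big_distrr /= H; case: ifP; rewrite ?mulr1 ?mulr0.
exact: Sm.
Qed.

Lemma Sc_true_inv g : forall m, Sc R T (fun _ => true) m -> Sc R T (fun _ => true) (walk_step e g m).
Proof.
apply: (@Sc_inv_gen g (fun _ => true) id) => s b /=.
case: b => /=; last by rewrite big_pred0.
exact: Kr_sum.
Qed.

Lemma conv (g : R) (c : T -> bool) (N : nat) : 0 <= g <= 1 -> (0 < N)%N ->
  (forall x y, c x = c y -> 0 < walk_dist e g x N y) ->
  (forall m, Sc R T c m -> Sc R T c (walk_step e g m)) ->
  forall m0, Sc R T c m0 -> ev0 (fun k => norm1 R T (iter k (walk_step e g) m0)).
Proof.
move=> hg N0 hpos hinv m0 Sm eps ep.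
have [d [d0 d1 hd]] := @fmin R _ (fun p : T * T => c p.1 = c p.2)
   (fun p => walk_dist e g p.1 N p.2) (fun p h => hpos _ _ h).
exact: (@decay R T (walk_step e g) (Kr R T e g) (walk_step_lin R T e g)
  (fun x y => Kr_ge0 R T e g x y hg) (Kr_sum R T e degpos g) c N d d0
  (fun x y h => hd (x, y) h) hinv d1 m0 Sm N0 eps ep).
Qed.

Definition Mx (x y : T) : nat := xchoose (reach_connect T e x y (hconn x y)).
Lemma Mx_reach x y : reach e (Mx x y) x y.
Proof. exact: (xchooseP (reach_connect T e x y (hconn x y))). Qed.
Definition Bd : nat := \sum_(p : T * T) Mx p.1 p.2.
Lemma Mx_le x y : (Mx x y <= Bd)%N.
Proof. by rewrite /Bd (bigD1 (x, y)) //= leq_addr. Qed.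

Lemma reach_N m N x y : reach e m x y -> ~~ odd m -> (m <= N)%N -> ~~ odd N -> reach e N x y.
Proof.
move=> h om hmN oN.
have hev : ~~ odd (N - m) by rewrite oddB // (negbTE om) (negbTE oN).
have E : N = (m + ((N - m)./2).*2)%N.
  have := odd_double_half (N - m); rewrite (negbTE hev) add0n => ->.
  by rewrite subnKC.
rewrite E; exact: reach_add2.
Qed.

Lemma lazy_up (g : R) x m n y : 0 < g <= 1 -> 0 < walk_dist e g x m y -> (m <= n)%N -> 0 < walk_dist e g x n y.
Proof.
move=> hg h hmn; rewrite -(subnKC hmn).
elim: (n - m)%N => [|j IH]; first by rewrite addn0.
rewrite addnS; exact: walk_lazy.
Qed.

Lemma dev_Sc_true w : Sc R T (fun _ => true) (fun x => dlt R T w x - pi x).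
Proof.
case=> /=; last by rewrite big_pred0.
rewrite sumrB pi_sum /dlt (bigD1 w) //= eqxx big1 ?addr0 ?subrr // => i /negbTE ->.
done.
Qed.

Lemma dev_iter g w k t : walk_dist e g w k t - pi t =
  iter k (walk_step e g) (fun x => dlt R T w x - pi x) t.
Proof. by rewrite iter_sub iter_stat. Qed.

Lemma C_lazy g w : 0 < g < 1 -> ev0 (fun k => norm1 R T (fun t => walk_dist e g w k t - pi t)).
Proof.
move=> /andP[g0 g1].
have hg : 0 <= g <= 1 by rewrite ltW // ltW.
have hg' : 0 < g <= 1 by rewrite g0 ltW.
have POS : forall x y, true = true -> 0 < walk_dist e g x Bd.+1 y.
  move=> x y _.
  have hg2 : 0 <= g < 1 by rewrite ltW.
  exact: (@lazy_up g x (Mx x y) Bd.+1 y hg' (walk_pos R T e degpos g (Mx x y) x y hg2 (Mx_reach x y)) (leqW (Mx_le x y))).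
have Hc := @conv g (fun _ => true) Bd.+1 hg isT POS (@Sc_true_inv g) _ (dev_Sc_true w).
apply: (@ev0_le R _ _ _ Hc) => k; rewrite /norm1 le_eqVlt; apply/orP; left; apply/eqP.
by apply: eq_bigr => t _; rewrite dev_iter.
Qed.

Lemma C_nb (m0 : nat) w : odd m0 -> reach e m0 r0 r0 ->
  ev0 (fun k => norm1 R T (fun t => walk_dist e (0:R) w k t - pi t)).
Proof.
move=> om hr.
have hg : 0 <= (0:R) <= 1 by rewrite lexx ler01.
have hg2 : 0 <= (0:R) < 1 by rewrite lexx ltr01.
pose N := ((Bd + m0).*2.+2)%N.
have POS : forall x y, true = true -> 0 < walk_dist e (0:R) x N y.
  move=> x y _; apply: (walk_pos R T e degpos 0 N x y hg2).
  have h1 := reach_cat (Mx_reach x r0) (Mx_reach r0 y).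
  have h2 := reach_cat (reach_cat (Mx_reach x r0) hr) (Mx_reach r0 y).
  have hb1 := Mx_le x r0; have hb2 := Mx_le r0 y.
  have oN : ~~ odd N by rewrite /N /= odd_double.
  case: (boolP (odd (Mx x r0 + Mx r0 y))) => ho.
    apply: (@reach_N _ N x y h2) => //.
      by move: ho om; rewrite !oddD; case: (odd (Mx x r0)); case: (odd (Mx r0 y)); case: (odd m0).
    rewrite /N -addnn; lia.
  apply: (@reach_N _ N x y h1) => //; rewrite /N -addnn; lia.
have Hc := @conv 0 (fun _ => true) N hg isT POS (@Sc_true_inv 0) _ (dev_Sc_true w).
apply: (@ev0_le R _ _ _ Hc) => k; rewrite /norm1 le_eqVlt; apply/orP; left; apply/eqP.
by apply: eq_bigr => t _; rewrite dev_iter.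
Qed.
Section Bip.
Hypothesis hNB : forall m, reach e m r0 r0 -> ~~ odd m.

Definition par (y : T) : bool := odd (Mx r0 y).

Lemma par_any n y : reach e n r0 y -> odd n = par y.
Proof.
move=> h.
have h2 := reach_cat h (reach_sym T e esym _ _ _ (Mx_reach r0 y)).
have := hNB _ h2; rewrite oddD /par.
by case: (odd n); case: (odd (Mx r0 y)).
Qed.

Lemma par_reach m x y : reach e m x y -> par y = par x (+) odd m.
Proof.
move=> h; rewrite -(par_any _ _ (reach_cat (Mx_reach r0 x) h)) oddD.
done.
Qed.

Lemma ebip x y : e x y -> par y = ~~ par x.
Proof. by move=> h; rewrite (par_reach _ _ _ (reach1 h)) addbT. Qed.

Lemma sum_ind' (P : pred T) x :
  \sum_w (if P w then (if w == x then 1 else 0) else 0) = (if P x then 1 else 0) :> R.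
Proof.
rewrite (bigD1 x) //= eqxx big1 ?addr0 //.
by move=> i /negbTE ->; case: (P i).
Qed.

Lemma class_Kr (g : R) s b : \sum_(x | par x == b) Kr R T e g s x =
  g * (if par s == b then 1 else 0) + (1 - g) * (if par s == ~~ b then 1 else 0).
Proof.
rewrite /Kr big_split /=; congr (_ + _).
  rewrite -big_distrr /= big_mkcond /=.
  by rewrite (sum_ind' (fun i => par i == b)).
rewrite big_mkcond /=.
have -> : \sum_x (if par x == b then (if e s x then (1 - g) / (gdeg e s)%:R else 0) else 0)
  = \sum_x (if e s x then (if par s == ~~ b then (1 - g) / (gdeg e s)%:R else 0) else 0).
  apply: eq_bigr => x _; case hsx: (e s x); last by case: ifP.
  by rewrite (ebip _ _ hsx); case: (par s); case: b.
rewrite sum_edge; case: ifP => _; last by rewrite mul0r mulr0.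
rewrite mulr1 -mulrA mulVf ?mulr1 //.
by rewrite pnatr_eq0 -lt0n degpos.
Qed.

Lemma class_step (g : R) m b : \sum_(x | par x == b) walk_step e g m x =
  g * \sum_(x | par x == b) m x + (1 - g) * \sum_(x | par x == ~~ b) m x.
Proof.
under eq_bigr do rewrite walk_step_lin.
rewrite exchange_big /=.
under eq_bigr do rewrite -big_distrr /= class_Kr mulrDr.
rewrite big_split /= !big_distrr /= !(big_mkcond (fun x => par x == _)) /=.
by congr (_ + _); apply: eq_bigr => x _; case: ifP => _; rewrite ?mulr1 ?mulr0 // mulrC.
Qed.

Lemma Sc_par_inv : forall m, Sc R T par m -> Sc R T par (walk_step e 0 m).
Proof. by move=> m Sm b; rewrite class_step !Sm !mulr0 addr0. Qed.

Lemma class_half b : \sum_(x | par x == b) pi x = 2^-1.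
Proof.
have E : \sum_(x | par x == b) pi x = \sum_(x | par x == ~~ b) pi x.
  rewrite -[LHS](@eq_bigr _ _ _ _ _ _ (fun x => walk_step e 0 pi x)); last by move=> x _; exact: pi_stat.
  by rewrite class_step mul0r add0r subr0 mul1r.
have S : \sum_(x | par x == b) pi x + \sum_(x | par x == ~~ b) pi x = 1.
  rewrite -pi_sum [RHS](bigID (fun x => par x == b)) /=; congr (_ + _).
  by apply: eq_bigl => x; move: E => _; case: (par x); case: b.
rewrite -E in S; lra.
Qed.

Definition tau (b : bool) (x : T) : R := if par x == b then 2 * pi x else 0.

Lemma tau_step b t : walk_step e 0 (tau b) t = tau (~~ b) t.
Proof.
rewrite /walk_step mul0r add0r deg_in.
have -> : \sum_s (if e t s then (1 - 0) / (gdeg e s)%:R * tau b s else 0)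
  = \sum_s (if e t s then (if par t == ~~ b then 2 / Dg else 0) else 0).
  apply: eq_bigr => s _; case hts: (e t s) => //.
  rewrite /tau (ebip _ _ hts) subr0 mul1r.
  have hd : (gdeg e s)%:R != 0 :> R by rewrite pnatr_eq0 -lt0n degpos.
  case: (par t); case: b => /=; rewrite ?mulr0 // /pi; field; by rewrite hd (gt_eqF Dg_pos).
rewrite sum_edge /tau /pi; case: ifP => _; last by rewrite mul0r.
by field; rewrite (gt_eqF Dg_pos).
Qed.

Lemma iter_tau k b : iter k (walk_step e 0) (tau b) = tau (b (+) odd k).
Proof.
elim: k => [|k IH] /=; first by rewrite addbF.
rewrite IH; apply/funext => t; rewrite tau_step; congr tau.
by rewrite addbN.
Qed.

Lemma dev_tau w k t : walk_dist e 0 w k t - tau (par w (+) odd k) t =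
  iter k (walk_step e 0) (fun x => dlt R T w x - tau (par w) x) t.
Proof. by rewrite iter_sub iter_tau. Qed.

Lemma sum_tau c b : \sum_(x | par x == b) tau c x = if b == c then 1 else 0.
Proof.
case: (eqVneq b c) => [<-|hbc].
  rewrite -[RHS](mulfV (x := 2 : R)) ?pnatr_eq0 // -(class_half b) big_distrr /=.
  apply: eq_bigr => x hx; by rewrite /tau hx.
apply: big1 => x /eqP hx; rewrite /tau; case: eqP => // hx'.
by move: hbc; rewrite -hx hx' eqxx.
Qed.

Lemma Sc_dev_tau w : Sc R T par (fun x => dlt R T w x - tau (par w) x).
Proof.
move=> b; rewrite sumrB sum_tau big_mkcond /=.
have -> : \sum_i (if par i == b then dlt R T w i else 0) = if par w == b then 1 else 0.
  by rewrite /dlt sum_ind'.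
by rewrite (eq_sym b); rewrite subrr.
Qed.

Lemma C_bip w : ev0 (fun k => norm1 R T (fun t => walk_dist e (0:R) w k t - tau (par w (+) odd k) t)).
Proof.
have hg : 0 <= (0:R) <= 1 by rewrite lexx ler01.
have hg2 : 0 <= (0:R) < 1 by rewrite lexx ltr01.
pose N := (Bd.*2.+2)%N.
have POS : forall x y, par x = par y -> 0 < walk_dist e (0:R) x N y.
  move=> x y hxy; apply: (walk_pos R T e degpos 0 N x y hg2).
  have h := Mx_reach x y; have hb := Mx_le x y.
  apply: (@reach_N _ N x y h).
  - by move: (par_reach _ _ _ h); rewrite hxy; case: (par y); case: (odd (Mx x y)).
  - rewrite /N -addnn; lia.
  - by rewrite /N /= odd_double.
have Hc := @conv 0 par N hg isT POS Sc_par_inv _ (Sc_dev_tau w).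
apply: (@ev0_le R _ _ _ Hc) => k; rewrite /norm1 le_eqVlt; apply/orP; left; apply/eqP.
by apply: eq_bigr => t _; rewrite dev_tau.
Qed.

Lemma supp_par w k x : walk_dist e (0:R) w k x != 0 -> par x = par w (+) odd k.
Proof. by move/walk_supp; apply: par_reach. Qed.

Lemma plan_exists (mu nu : T -> R) : (forall a, 0 <= mu a) -> (forall a, 0 <= nu a) ->
  \sum_a mu a = 1 -> \sum_a nu a = 1 -> exists P, transport_plan mu nu P.
Proof.
move=> mu0 nu0 smu snu; exists (fun a b => mu a * nu b); split; [|split].
- by move=> a b; apply: mulr_ge0.
- by move=> a; rewrite -big_distrr /= snu mulr1.
- by move=> b; rewrite -big_distrl /= smu mul1r.
Qed.

Lemma W_ev0 (g1 g2 : R) w1 w2 (rho : nat -> T -> R) : 0 <= g1 <= 1 -> 0 <= g2 <= 1 ->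
  ev0 (fun k => norm1 R T (fun t => walk_dist e g1 w1 k t - rho k t)) ->
  ev0 (fun k => norm1 R T (fun t => walk_dist e g2 w2 k t - rho k t)) ->
  ev0 (fun k => wasserstein e (walk_dist e g1 w1 k) (walk_dist e g2 w2 k)).
Proof.
move=> hg1 hg2 h1 h2.
have H := @ev0_scale R #|T|%:R _ (ler0n _ _) (@ev0_add R _ _ h1 h2).
apply: (@ev0_le R _ _ _ H) => k.
apply: le_trans (UB_L1 R T e _ _ _ _ _) _.
- by move=> a; apply: walk_ge0.
- by move=> a; apply: walk_ge0.
- by rewrite !(walk_mass R T e degpos).
apply: ler_wpM2l; first by rewrite ler0n.
rewrite /norm1 -big_split /=; apply: ler_sum => t _.
set a := walk_dist e g1 w1 k t; set b := walk_dist e g2 w2 k t; set c0 := rho k t.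
have -> : a - b = (a - c0) + (c0 - b) by rewrite addrA subrK.
apply: (le_trans (ler_normD _ _)); apply: lerD => //.
by rewrite -opprB normrN.
Qed.

Lemma supp0 w k x : par x != par w (+) odd k -> walk_dist e (0:R) w k x = 0.
Proof.
move=> h; apply/eqP; apply/negPn/negP => /supp_par hx.
by move: h; rewrite hx eqxx.
Qed.

Lemma sum_supp (g : R) w k (phi : T -> bool) : 0 <= g <= 1 ->
  (forall x, walk_dist e g w k x != 0 -> phi x) ->
  \sum_x (if phi x then walk_dist e g w k x else 0) = 1.
Proof.
move=> hg H; rewrite -(walk_mass R T e degpos g w k); apply: eq_bigr => x _.
case: ifP => // hp; apply/eqP; rewrite eq_sym; apply/negPn/negP => /H; by rewrite hp.
Qed.

Lemma W_ge1 v k : par v != par r0 ->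
  1 <= wasserstein e (walk_dist e (0:R) r0 k) (walk_dist e (0:R) v k).
Proof.
move=> hv.
have hg : 0 <= (0:R) <= 1 by rewrite lexx ler01.
apply: W_ge.
  apply: plan_exists; try (by move=> a; apply: walk_ge0); by rewrite (walk_mass R T e degpos).
move=> P hP; apply: le_trans (LB_ind R T e _ _ _ (fun x => par x == par v (+) odd k) hP).
rewrite (@sum_supp 0 v k) //; last by move=> x /supp_par ->.
rewrite big1 ?subr0 // => x _; case: ifP => // /eqP hx; apply: supp0.
by rewrite hx; move: hv; case: (par v); case: (par r0); case: (odd k).
Qed.

Section Lazy.
Variables (v : T) (beta : R).
Hypothesis hb0 : 0 < beta.
Hypothesis hb1 : beta < 1.

Let mu k := walk_dist e (0:R) r0 k.
Let nu k := walk_dist e beta v k.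
Definition ak k := par r0 (+) odd k.
Definition pk k := \sum_(x | par x == ~~ ak k) nu k x.

Lemma hbeta : 0 <= beta <= 1.
Proof. by rewrite !ltW. Qed.

Lemma mass_compl b k : \sum_(x | par x == b) nu k x + \sum_(x | par x == ~~ b) nu k x = 1.
Proof.
rewrite -(walk_mass R T e degpos beta v k) [RHS](bigID (fun x => par x == b)) /=; congr (_ + _).
by apply: eq_bigl => x; case: (par x); case: b.
Qed.

Lemma p_rec k : pk k.+1 - 2^-1 = (1 - 2 * beta) * (pk k - 2^-1).
Proof.
have E : ~~ ak k.+1 = ak k by rewrite /ak /= addbN negbK.
rewrite /pk E /nu /walk_dist /= class_step -/(walk_dist e beta v k).
have := mass_compl (ak k) k; rewrite /nu.
set A := \sum_(x | par x == ak k) _; set B := \sum_(x | par x == ~~ ak k) _.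
move=> h; have -> : A = 1 - B by lra.
by field.
Qed.

Lemma p_form k : pk k - 2^-1 = (1 - 2 * beta) ^+ k * (pk 0 - 2^-1).
Proof.
elim: k => [|k IH]; first by rewrite expr0 mul1r.
by rewrite p_rec IH exprS mulrA.
Qed.

Lemma p0_abs : `|pk 0 - 2^-1| = 2^-1.
Proof.
have -> : pk 0 = if par v == ~~ ak 0 then 1 else 0.
  rewrite /pk /nu /walk_dist /= big_mkcond /=.
  exact: (sum_ind' (fun x => par x == ~~ ak 0)).
have h2 : (0:R) <= 2^-1 by rewrite invr_ge0 ler0n.
case: ifP => _.
  have -> : (1:R) - 2^-1 = 2^-1 by field.
  by rewrite ger0_norm.
by rewrite sub0r normrN ger0_norm.
Qed.

Lemma p_abs k : `|pk k - 2^-1| = 2^-1 * `|1 - 2 * beta| ^+ k.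
Proof. by rewrite p_form normrM normrX p0_abs mulrC. Qed.

Lemma W_lb k : pk k <= wasserstein e (mu k) (nu k).
Proof.
have hg : 0 <= (0:R) <= 1 by rewrite lexx ler01.
apply: W_ge.
  apply: plan_exists; try (by move=> a; apply: walk_ge0 => //; exact: hbeta);
    by rewrite (walk_mass R T e degpos).
move=> P hP; apply: le_trans (LB_ind R T e _ _ _ (fun x => par x == ~~ ak k) hP).
rewrite [X in _ - X]big1 ?subr0.
  by rewrite /pk big_mkcond.
move=> x _; case: ifP => // /eqP hx; apply: supp0.
by rewrite hx -/(ak k); case: (ak k).
Qed.

Lemma sum_diag_plus (a0 : T) (X : R) (Y : T -> R) : Y a0 = 0 ->
  \sum_b (if a0 == b then X else Y b) = X + \sum_b Y b.
Proof.
move=> hY; rewrite (bigD1 a0) //= eqxx [in RHS](bigD1 a0) //= hY add0r; congr (_ + _).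
by apply: eq_bigr => b hb; rewrite eq_sym (negbTE hb).
Qed.

Lemma W_ub : exists N, forall k, (N <= k)%N -> wasserstein e (mu k) (nu k) <= pk k.
Proof.
have [K [K0 HK]] := surj_bound R T e par esym eirr ebip r0 hconn.
have Dg0 := Dg_pos.
pose eps0 : R := (4 * Dg * (K + 1))^-1.
have eps0_pos : 0 < eps0 by rewrite /eps0 invr_gt0; apply: mulr_gt0; [apply: mulr_gt0 => //|]; lra.
have hb01 : 0 < beta < 1 by rewrite hb0 hb1.
have C1 := C_bip r0.
have C2 := C_lazy beta v hb01.
have hq : 0 <= `|1 - 2 * beta| < 1.
  rewrite normr_ge0 /=; rewrite ltr_norml; apply/andP; split; lra.
have C3 : ev0 (fun k => `|pk k - 2^-1|).
  have h2 : (0:R) <= 2^-1 by rewrite invr_ge0 ler0n.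
  have H := @ev0_scale R 2^-1 _ h2 (@ev0_geo R _ hq).
  apply: (@ev0_le R _ _ _ H) => k; by rewrite p_abs.
have C4 := @ev0_add R _ _ (@ev0_add R _ _ C1 C2) (@ev0_scale R 2 _ (ler0n _ 2) C3).
have [M1 HM1] := C4 _ eps0_pos.
have q4 : (0:R) < 4^-1 by rewrite invr_gt0 ltr0n.
have [M2 HM2] := C3 _ q4.
exists (maxn M1 M2) => k hk.
have hk1 := HM1 k (leq_trans (leq_maxl _ _) hk).
have hk2 := HM2 k (leq_trans (leq_maxr _ _) hk).
move: hk1 hk2 => /=.
set p := pk k; set a := ak k.
move=> hk1 hk2.
have p4 : 4^-1 <= p.
  have := ler_norm (2^-1 - p); rewrite distrC => h.
  have : (2:R)^-1 = 2 * 4^-1 by field.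
  lra.
pose h x := if par x == a then mu k x - nu k x - 2 * p * pi x else nu k x - 2 * p * pi x.
have hpt x : `|h x| <= `|mu k x - tau a x| + `|nu k x - pi x| + 2 * `|p - 2^-1| * pi x.
  have hpi := pi_ge0 x.
  have n1 := ler_norm (mu k x - tau a x); have n1' := ler_norm (- (mu k x - tau a x)).
  have n2 := ler_norm (nu k x - pi x); have n2' := ler_norm (- (nu k x - pi x)).
  have n3 := ler_norm (p - 2^-1); have n3' := ler_norm (- (p - 2^-1)).
  rewrite !normrN in n1' n2' n3'.
  have m3 : 0 <= (`|p - 2^-1| - (p - 2^-1)) * pi x by apply: mulr_ge0; lra.
  have m3' : 0 <= (`|p - 2^-1| + (p - 2^-1)) * pi x by apply: mulr_ge0; lra.
  rewrite mulrBl in m3; rewrite mulrDl in m3'.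
  have E1 : 2 * p * pi x = pi x + 2 * ((p - 2^-1) * pi x) by field.
  have E2 : 2 * `|p - 2^-1| * pi x = 2 * (`|p - 2^-1| * pi x) by rewrite mulrA.
  rewrite E2 /h; case: ifP => hx.
    have Et : tau a x = 2 * pi x by rewrite /tau hx.
    rewrite Et in n1 n1' *; rewrite E1 ler_norml; apply/andP; split; lra.
  have Et : tau a x = 0 by rewrite /tau hx.
  rewrite Et in n1 n1' *; rewrite E1 ler_norml; apply/andP; split; lra.
have hsum : \sum_x `|h x| <= eps0.
  apply: le_trans hk1.
  have -> : 2 * `|p - 2^-1| = \sum_x 2 * `|p - 2^-1| * pi x by rewrite -big_distrr /= pi_sum mulr1.
  rewrite /norm1 -!big_split /=; apply: ler_sum => x _; exact: hpt x.
have hg0 : 0 <= (0:R) <= 1 by rewrite lexx ler01.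
have Smu : \sum_(x | par x == a) mu k x = 1.
  rewrite big_mkcond /=; apply: (@sum_supp 0 r0 k (fun x => par x == a)) => // x /supp_par ->.
  by [].
have hS : forall b, \sum_(x | par x == b) h x = 0.
  move=> b; case: (eqVneq b a) => [->|hba].
    rewrite (eq_bigr (fun x => mu k x - nu k x - 2 * p * pi x)); last by move=> x hx; rewrite /h hx.
    rewrite !sumrB -big_distrr /= Smu class_half.
    have hm := mass_compl a k.
    have hp : \sum_(x | par x == ~~ a) nu k x = p by [].
    rewrite hp in hm; lra.
  have hb : b = ~~ a by move: hba; case: b; case: (a).
  rewrite hb (eq_bigr (fun x => nu k x - 2 * p * pi x)); last first.
    by move=> x /eqP hx; rewrite /h hx; case: (a).
  rewrite sumrB -big_distrr /= class_half.
  have hp : \sum_(x | par x == ~~ a) nu k x = p by [].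
  rewrite hp; lra.
have [C [HC HCb]] := HK h hS.
have Ke : K * eps0 <= (4 * Dg)^-1.
  have E : K * eps0 = (4 * Dg)^-1 * (K / (K + 1)).
    rewrite /eps0; field.
    by rewrite (gt_eqF Dg0) /=; apply/andP; split => //; rewrite gt_eqF //; lra.
  rewrite E -[X in _ <= X]mulr1; apply: ler_wpM2l.
    by rewrite invr_ge0; apply: mulr_ge0 => //; exact: ltW.
  rewrite ler_pdivrMr ?mul1r; lra.
have Cb x y : `|C x y| <= 4^-1 * Dg^-1.
  rewrite -invfM; apply: le_trans Ke; apply: le_trans (HCb x y) _.
  exact: ler_wpM2l.
pose F x y := 2 * p * Dg^-1 + C x y + C y x.
have F0 x y : 0 <= F x y.
  have h1 := Cb x y; have h2 := Cb y x.
  rewrite ler_norml in h1; rewrite ler_norml in h2.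
  move: h1 h2 => /andP[h1 _] /andP[h2 _].
  have t0 : 0 < Dg^-1 by rewrite invr_gt0.
  have : 0 <= (p - 4^-1) * Dg^-1 by apply: mulr_ge0; lra.
  rewrite /F; lra.
have split_if (x y : T) (A B1 B2 : R) : (if e x y then A + B1 + B2 else 0) =
    (if e x y then A else 0) + (if e x y then B1 + B2 else 0).
  by case: (e x y); rewrite ?addr0 // addrA.
have rowF x : \sum_y (if e x y then F x y else 0) = 2 * p * pi x + h x.
  rewrite -HC /Lop /F.
  under eq_bigr do rewrite split_if.
  rewrite big_split /= sum_edge /pi; congr (_ + _).
  by rewrite -!mulrA [Dg^-1 * _]mulrC.
have colF y : \sum_x (if e y x then F x y else 0) = 2 * p * pi y + h y.
  rewrite -HC /Lop /F.
  under eq_bigr do rewrite split_if.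
  rewrite big_split /= sum_edge /pi; congr (_ + _).
    by rewrite -!mulrA [Dg^-1 * _]mulrC.
  by apply: eq_bigr => x _; rewrite addrC.
pose Q x y := if par x == a then (if e x y then F x y else 0) else 0.
have colQ y : \sum_x Q x y = if par y == a then 0 else nu k y.
  case: ifP => hy.
    apply: big1 => x _; rewrite /Q; case: ifP => hx //; case: ifP => hxy //.
    by move: hy; rewrite (ebip _ _ hxy) (eqP hx); case: (a).
  have -> : nu k y = 2 * p * pi y + h y by rewrite /h hy; ring.
  rewrite -colF; apply: eq_bigr => x _; rewrite /Q.
  case hyx: (e y x).
    have hxy : e x y by rewrite esym.
    have hx : par x == a by move: hy; rewrite (ebip _ _ hyx); case: (par y); case: (a).
    by rewrite hx hxy.
  have hxy : e x y = false by rewrite esym.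
  by rewrite hxy; case: ifP.
pose P x y := if par x == a then (if x == y then nu k x else if e x y then F x y else 0) else 0.
have PQ x y : P x y = (if par x == a then (if x == y then nu k x else 0) else 0) + Q x y.
  rewrite /P /Q; case: ifP => _; last by rewrite addr0.
  case: eqP => [->|_]; [by rewrite eirr addr0 | by rewrite add0r].
have nu0 x : 0 <= nu k x by apply: walk_ge0; exact: hbeta.
have hplan : transport_plan (mu k) (nu k) P.
  split; [|split].
  - move=> x y; rewrite /P; case: ifP => // _; case: ifP => _ //; case: ifP => // _; exact: F0.
  - move=> x; rewrite /P; case hx: (par x == a) => /=.
      rewrite (@sum_diag_plus x (nu k x) (fun b => if e x b then F x b else 0)); last by rewrite eirr.
      by rewrite rowF /h hx; ring.
    rewrite big1 // /mu supp0 //; exact: (negbT hx).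
  - move=> y; under eq_bigr do rewrite PQ.
    rewrite big_split /= colQ.
    rewrite (eq_bigr (fun x => if x == y then (if par x == a then nu k x else 0) else 0)); last first.
      by move=> x _; case: (par x == a); case: (x == y).
    rewrite (sum_diag R T (fun i => if par i == a then nu k i else 0) y) /=.
    by case: ifP => _; rewrite ?addr0 ?add0r.
have hcost : cost R T e P <= p.
  apply: (@le_trans _ _ (\sum_x \sum_y Q x y)).
    rewrite /cost; apply: ler_sum => x _; apply: ler_sum => y _.
    rewrite PQ mulrDr.
    have -> : (gdist e x y)%:R * (if par x == a then (if x == y then nu k x else 0) else 0) = 0 :> R.
      case: ifP => _; last by rewrite mulr0.
      case: eqP => [->|_]; last by rewrite mulr0.
      by rewrite gdist_aa mul0r.
    rewrite add0r /Q; case: ifP => _; last by rewrite mulr0.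
    case hxy: (e x y); last by rewrite mulr0.
    have hne : x != y by apply/eqP => hh; move: hxy; rewrite hh eirr.
    have hd : (gdist e x y)%:R <= 1%:R :> R by rewrite ler_nat; exact: (gdist_edge T e x y hxy hne).
    by rewrite -[X in _ <= X]mul1r; apply: ler_wpM2r; [exact: F0 | exact: hd].
  rewrite exchange_big /=; under eq_bigr do rewrite colQ.
  have -> : p = \sum_y (if par y == ~~ a then nu k y else 0) by rewrite /p /pk big_mkcond.
  rewrite le_eqVlt; apply/orP; left; apply/eqP; apply: eq_bigr => y _.
  by case: (par y); case: (a).
exact: le_trans (W_le R T e _ _ _ hplan) hcost.
Qed.

Lemma W_exact : exists N, forall k, (N <= k)%N ->
  `|wasserstein e (walk_dist e (0:R) r0 k) (walk_dist e beta v k) - 2^-1| = 2^-1 * `|1 - 2 * beta| ^+ k.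
Proof.
have [N HN] := W_ub; exists N => k hk.
have h1 := HN k hk; have h2 := W_lb k.
have -> : wasserstein e (walk_dist e (0:R) r0 k) (walk_dist e beta v k) = pk k by apply/eqP; rewrite eq_le h1 h2.
exact: p_abs.
Qed.

End Lazy.
End Bip.
End Main.
Lemma inf_empty (R : realType) (S : set R) : ~ (exists c, S c) -> inf S = 0.
Proof.
move=> h; have -> : S = set0 by apply/seteqP; split => c // hc; exfalso; apply: h; exists c.
exact: inf0.
Qed.

Theorem theorem5p7 (R : realType) (T : finType) (e : rel T) (u v : T)
  (alpha beta : R) :
  simple_graph e -> connected_graph e ->
  0 <= alpha -> alpha <= beta -> beta <= 1 ->
  W_guvab e u v alpha beta @ \oo --> (2^-1 : R) ->
  beta < 1 ->
  exists N : nat, forall k : nat, (N <= k)%N ->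
    `|W_guvab e u v alpha beta k - 2^-1| = 2^-1 * `|1 - 2 * beta| ^+ k.
Proof.
move=> [esym eirr] hconn ha hab hb1 Hlim hb.
have q4 : (0:R) < 4^-1 by rewrite invr_gt0 ltr0n.
have [N0 HN0] : exists N0, forall k, (N0 <= k)%N -> `|2^-1 - W_guvab e u v alpha beta k| < 4^-1.
  move/cvgrPdist_lt: Hlim => /(_ 4^-1 q4) [N0 _ HN].
  by exists N0 => k hk; apply: HN.
have contra : ev0 (fun k => W_guvab e u v alpha beta k) -> False.
  move=> /(_ 8^-1 _) [|M HM]; first by rewrite invr_gt0 ltr0n.
  have h1 := HN0 (maxn N0 M) (leq_maxl _ _); have h2 := HM (maxn N0 M) (leq_maxr _ _).
  move: h1 h2; set w := W_guvab _ _ _ _ _ _ => h1 h2.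
  have := ler_norm (2^-1 - w).
  have e1 : (2:R)^-1 = 4^-1 + 4^-1 by field.
  have e2 : (4:R)^-1 = 8^-1 + 8^-1 by field.
  have : (0:R) < 8^-1 by rewrite invr_gt0 ltr0n.
  lra.
case: (pselect (forall x, (0 < gdeg e x)%N)) => [degpos|ndeg]; last first.
  exfalso; apply: contra => eps ep; exists 0%N => k _.
  have [x0 hx0] : exists x0, gdeg e x0 = 0%N.
    case: (pselect (exists x0, gdeg e x0 = 0%N)) => [//|hn]; exfalso; apply: ndeg => x.
    by rewrite lt0n; apply/eqP => h; apply: hn; exists x.
  have single : forall y, y = x0.
    move=> y; have := hconn x0 y; move/connectP => [p hp ->]; case: p hp => [//|z p] /= /andP[hz _].
    exfalso; move: hx0; rewrite /gdeg => /eqP; rewrite cards_eq0 => /eqP H.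
    have : z \in [set y | e x0 y]%SET by rewrite inE.
    by rewrite H inE.
  rewrite /W_guvab.
  case: (pselect (exists P, transport_plan (walk_dist e alpha u k) (walk_dist e beta v k) P)) => [[P hP]|nP].
    apply: le_trans (W_le R T e _ _ _ hP) _.
    have -> : cost R T e P = 0.
      by apply: big1 => a _; apply: big1 => b _; rewrite (single a) (single b) gdist_aa mul0r.
    exact: ltW.
  rewrite /wasserstein inf_empty; first exact: ltW.
  by move=> [c [P [hP _]]]; apply: nP; exists P.
have ha1 : alpha < 1 by lra.
case: (ltrP 0 alpha) => ha0.
  exfalso; apply: contra.
  have hb0 : 0 < beta by lra.
  have h1 : 0 <= alpha <= 1 by apply/andP; split; lra.
  have h2 : 0 <= beta <= 1 by apply/andP; split; lra.
  have h3 : 0 < alpha < 1 by apply/andP; split; lra.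
  have h4 : 0 < beta < 1 by apply/andP; split; lra.
  exact: (W_ev0 R T e degpos alpha beta u v (fun _ => pi R T e) h1 h2
    (C_lazy R T e esym hconn degpos u alpha u h3) (C_lazy R T e esym hconn degpos u beta v h4)).
have a0 : alpha = 0 by apply/eqP; rewrite eq_le ha0 ha.
subst alpha.
have h00 : 0 <= (0:R) <= 1 by rewrite lexx ler01.
case: (pselect (exists m, odd m /\ reach e m u u)) => [[m0 [om hr]]|nNB].
  exfalso; apply: contra.
  have Cu := C_nb R T e esym hconn degpos u m0 u om hr.
  case: (ltrP 0 beta) => hb0.
    have h2 : 0 <= beta <= 1 by apply/andP; split; lra.
    have h4 : 0 < beta < 1 by apply/andP; split; lra.
    exact: (W_ev0 R T e degpos 0 beta u v (fun _ => pi R T e) h00 h2 Cu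
      (C_lazy R T e esym hconn degpos u beta v h4)).
  have b0 : beta = 0 by apply/eqP; rewrite eq_le hb0 (le_trans ha hab).
  subst beta.
  exact: (W_ev0 R T e degpos 0 0 u v (fun _ => pi R T e) h00 h00 Cu
    (C_nb R T e esym hconn degpos u m0 v om hr)).
have hNB : forall m, reach e m u u -> ~~ odd m.
  by move=> m hm; apply/negP => om; apply: nNB; exists m.
case: (ltrP 0 beta) => hb0.
  exact: (W_exact R T e esym eirr hconn degpos u hNB v beta hb0 hb).
have b0 : beta = 0 by apply/eqP; rewrite eq_le hb0 hab.
subst beta; exfalso.
case: (eqVneq (par T e hconn u v) (par T e hconn u u)) => hpv.
  apply: contra.
  have Cu := C_bip R T e esym hconn degpos u hNB u.
  have Cv := C_bip R T e esym hconn degpos u hNB v.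
  rewrite hpv in Cv.
  exact: (W_ev0 R T e degpos 0 0 u v (fun k => tau R T e hconn u (par T e hconn u u (+) odd k)) h00 h00 Cu Cv).
have h1 := W_ge1 R T e esym hconn degpos u hNB v N0 hpv.
have h2 := HN0 N0 (leqnn N0).
move: h1 h2; rewrite /W_guvab; set w := wasserstein _ _ _ => h1 h2.
have := ler_norm (w - 2^-1); rewrite distrC.
have e1 : (2:R)^-1 = 4^-1 + 4^-1 by field.
have e3 : (1:R) = 2^-1 + 2^-1 by field.
lra.
Qed.
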